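(* Let $\mathcal{A}$ and $\mathcal{B}$ be unital complex algebras with faithful and regular Sylvester rank functions $\mathrm{rk}_{\mathcal{A}}$ and $\mathrm{rk}_{\mathcal{B}}$. Let $X=(X_1,\dots,X_d)\in\mathcal{A}^d$ and $Y=(Y_1,\dots,Y_d)\in\mathcal{B}^d$ be such that for any matrix $A$ over $\mathbb{C}\langle x_1,\dots,x_d\rangle$, $\mathrm{rk}_{\mathcal{A}}(A(X))=\mathrm{rk}_{\mathcal{B}}(A(Y))$. Then the rational closures $\mathcal{A}_X$ and $\mathcal{B}_Y$ are isomorphic. Moreover, for any rational expression $R$ in $x_1,\dots,x_d$, $R(Y)$ is well-defined if and only if $R(X)$ is well-defined, and then $\mathrm{rk}_{\mathcal{B}}(R(Y))=\mathrm{rk}_{\mathcal{A}}(R(X))$.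
   Context: A Sylvester rank function on a unital complex algebra $\mathcal{A}$ is a function $\mathrm{rk}$ from rectangular matrices over $\mathcal{A}$ to $[0,\infty)$ with $\mathrm{rk}(0)=0$, $\mathrm{rk}(1)=1$, $\mathrm{rk}(AB)\le\min(\mathrm{rk}A,\mathrm{rk}B)$, $\mathrm{rk}(A\oplus B)=\mathrm{rk}A+\mathrm{rk}B$, $\mathrm{rk}\begin{pmatrix}A&C\\0&B\end{pmatrix}\ge\mathrm{rk}A+\mathrm{rk}B$. Faithful: $\mathrm{rk}(A)>0$ for $A\neq0$. Regular: $A\in M_n(\mathcal{A})$ with $\mathrm{rk}(A)=n$ is invertible. For a tuple $X$ in $\mathcal{A}$, $\Sigma_X$ is the set of square matrices $A$ over $\mathbb{C}\langle x_1,\dots,x_d\rangle$ with $A(X)$ invertible; the rational closure $\mathcal{A}_X$ is the set of all entries of $A(X)^{-1}$, $A\in\Sigma_X$ (a subalgebra of $\mathcal{A}$). Rational expressions are combinations of scalars and the $x_i$ via $+,\cdot,{}^{-1}$, parentheses, evaluated recursively with inverses defined only where the argument is invertible in the algebra; ''well-defined'' means the tuple lies in the domain. *)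

(* Defs.v *)
From HB Require Import structures.
From mathcomp Require Import all_boot all_order all_algebra.
From mathcomp Require Import reals Rstruct complex.
Set Implicit Arguments. Unset Strict Implicit. Unset Printing Implicit Defensive.
Import Order.TTheory GRing.Theory Num.Theory.
Local Open Scope ring_scope.

Notation Rr := Rdefinitions.R.
Definition Cx : fieldType := (Rr[i])%C.

Definition mx_invertible (A : nzRingType) (n : nat) (M : 'M[A]_n) : Prop :=
  exists N : 'M[A]_n, M *m N = 1%:M /\ N *m M = 1%:M.

Definition sylvester_rank (A : algType Cx)
    (rk : forall m n : nat, 'M[A]_(m, n) -> Rr) : Prop :=
  [/\ (forall m n (M : 'M[A]_(m, n)), 0 <= rk m n M) /\
        (forall m n, rk m n 0 = 0),
      rk 1%N 1%N 1%:M = 1,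
      (forall m n p (M : 'M[A]_(m, n)) (N : 'M[A]_(n, p)),
          rk m p (M *m N) <= Num.min (rk m n M) (rk n p N)),
      (forall m1 n1 m2 n2 (M : 'M[A]_(m1, n1)) (N : 'M[A]_(m2, n2)),
          rk (m1 + m2)%N (n1 + n2)%N (block_mx M 0 0 N) = rk m1 n1 M + rk m2 n2 N)
    & (forall m1 n1 m2 n2 (M : 'M[A]_(m1, n1)) (P : 'M[A]_(m1, n2))
          (N : 'M[A]_(m2, n2)),
          rk m1 n1 M + rk m2 n2 N <= rk (m1 + m2)%N (n1 + n2)%N (block_mx M P 0 N))].

Definition rank_faithful (A : algType Cx)
    (rk : forall m n : nat, 'M[A]_(m, n) -> Rr) : Prop :=
  forall m n (M : 'M[A]_(m, n)), M != 0 -> 0 < rk m n M.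

Definition rank_regular (A : algType Cx)
    (rk : forall m n : nat, 'M[A]_(m, n) -> Rr) : Prop :=
  forall n (M : 'M[A]_n), rk n n M = n%:R -> mx_invertible M.

(** Noncommutative polynomials in x_1..x_d over C, as formal expressions
    (every element of C<x_1,..,x_d> is represented by such an expression,
    and evaluation factors through the free algebra). *)
Inductive ncpoly (d : nat) : Type :=
  | NCConst of Cx
  | NCVar of 'I_d
  | NCAdd of ncpoly d & ncpoly d
  | NCMul of ncpoly d & ncpoly d.

Fixpoint nceval (A : algType Cx) d (X : 'I_d -> A) (p : ncpoly d) : A :=
  match p with
  | NCConst c => c%:A
  | NCVar i => X i
  | NCAdd p q => nceval X p + nceval X q
  | NCMul p q => nceval X p * nceval X q
  end.

Definition mxeval (A : algType Cx) d (X : 'I_d -> A) m n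
    (P : 'M[ncpoly d]_(m, n)) : 'M[A]_(m, n) :=
  \matrix_(i, j) nceval X (P i j).

Definition rational_closure (A : algType Cx) d (X : 'I_d -> A) (a : A) : Prop :=
  exists n (P : 'M[ncpoly d]_n) (N : 'M[A]_n) (i j : 'I_n),
    mxeval X P *m N = 1%:M /\ N *m mxeval X P = 1%:M /\ a = N i j.

Definition subalg_isomorphic (A B : algType Cx) (SA : A -> Prop) (SB : B -> Prop)
  : Prop :=
  exists f : A -> B,
    [/\ (forall a, SA a -> SB (f a)) /\
          (forall a1 a2, SA a1 -> SA a2 -> f a1 = f a2 -> a1 = a2),
        (forall b, SB b -> exists2 a, SA a & f a = b),
        (forall a1 a2, SA a1 -> SA a2 -> f (a1 + a2) = f a1 + f a2) /\
          (forall a1 a2, SA a1 -> SA a2 -> f (a1 * a2) = f a1 * f a2),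
        (forall (c : Cx) a, SA a -> f (c *: a) = c *: f a)
      & f 1 = 1].

Inductive ratexpr (d : nat) : Type :=
  | RConst of Cx
  | RVar of 'I_d
  | RAdd of ratexpr d & ratexpr d
  | RMul of ratexpr d & ratexpr d
  | RInv of ratexpr d.

Inductive rat_eval (A : algType Cx) d (X : 'I_d -> A) : ratexpr d -> A -> Prop :=
  | rev_const c : rat_eval X (RConst d c) (c%:A)
  | rev_var i : rat_eval X (RVar i) (X i)
  | rev_add r s a b : rat_eval X r a -> rat_eval X s b -> rat_eval X (RAdd r s) (a + b)
  | rev_mul r s a b : rat_eval X r a -> rat_eval X s b -> rat_eval X (RMul r s) (a * b)
  | rev_inv r a b : rat_eval X r a -> a * b = 1 -> b * a = 1 -> rat_eval X (RInv r) b.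

Definition well_defined (A : algType Cx) d (X : 'I_d -> A) (r : ratexpr d) : Prop :=
  exists a, rat_eval X r a.

(* Main.v *)
Require Import Defs.
From mathcomp Require Import all_boot all_order all_algebra.
From mathcomp Require Import reals Rstruct complex.
From Stdlib Require Import ClassicalEpsilon.
Set Implicit Arguments. Unset Strict Implicit. Unset Printing Implicit Defensive.
Import Order.TTheory GRing.Theory Num.Theory.
Local Open Scope ring_scope.

Section PolyMx.
Variable d : nat.
Definition zmx m n : 'M[ncpoly d]_(m, n) := const_mx (NCConst d 0).
Definition cmx1 (p : ncpoly d) : 'M[ncpoly d]_(1, 1) := const_mx p.
Definition negmx m n (M : 'M[ncpoly d]_(m, n)) :=
  map_mx (fun p => NCMul (NCConst d (-1)) p) M.
Definition sclmx (c : Cx) m n (M : 'M[ncpoly d]_(m, n)) :=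
  map_mx (fun p => NCMul (NCConst d c) p) M.
Definition outmx m n (v : 'M[ncpoly d]_(m, 1)) (u : 'M[ncpoly d]_(1, n)) :
  'M[ncpoly d]_(m, n) := \matrix_(i, j) NCMul (v i 0) (u 0 j).
Definition drow n (i : 'I_n) : 'M[ncpoly d]_(1, n) :=
  \matrix_(k, l) NCConst d ((l == i)%:R).
Definition dcol n (i : 'I_n) : 'M[ncpoly d]_(n, 1) :=
  \matrix_(k, l) NCConst d ((k == i)%:R).
End PolyMx.

Section Eval.
Variables (Z : algType Cx) (d : nat) (W : 'I_d -> Z).

Lemma mxevalE m n (M : 'M[ncpoly d]_(m, n)) : mxeval W M = map_mx (nceval W) M.
Proof. by apply/matrixP=> i j; rewrite !mxE. Qed.

Lemma ev_block m1 m2 n1 n2 (a : 'M_(m1, n1)) (b : 'M_(m1, n2)) (c : 'M_(m2, n1))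
   (e : 'M_(m2, n2)) :
  mxeval W (block_mx a b c e) = block_mx (mxeval W a) (mxeval W b) (mxeval W c) (mxeval W e).
Proof. by rewrite !mxevalE map_block_mx. Qed.

Lemma ev_row m n1 n2 (a : 'M_(m, n1)) (b : 'M_(m, n2)) :
  mxeval W (row_mx a b) = row_mx (mxeval W a) (mxeval W b).
Proof. by rewrite !mxevalE map_row_mx. Qed.

Lemma ev_col m1 m2 n (a : 'M_(m1, n)) (b : 'M_(m2, n)) :
  mxeval W (col_mx a b) = col_mx (mxeval W a) (mxeval W b).
Proof. by rewrite !mxevalE map_col_mx. Qed.

Lemma ev_zmx m n : mxeval W (zmx d m n) = 0.
Proof. by apply/matrixP=> i j; rewrite !mxE /= scale0r. Qed.

Lemma ev_cmx1 p : mxeval W (cmx1 p) = (nceval W p)%:M.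
Proof. by apply/matrixP=> i j; rewrite !mxE !ord1 eqxx mulr1n. Qed.

Lemma ev_neg m n (M : 'M_(m, n)) : mxeval W (negmx M) = - mxeval W M.
Proof. by apply/matrixP=> i j; rewrite !mxE /= scaleN1r mulN1r. Qed.

Lemma ev_scl c m n (M : 'M_(m, n)) :
  mxeval W (sclmx c M) = (c%:A)%:M *m mxeval W M.
Proof. by apply/matrixP=> i j; rewrite mul_scalar_mx !mxE. Qed.

Lemma ev_out m n (v : 'M_(m, 1)) (u : 'M_(1, n)) :
  mxeval W (outmx v u) = mxeval W v *m mxeval W u.
Proof. by apply/matrixP=> i j; rewrite !mxE big_ord1 !mxE. Qed.

Lemma ev_drow n (i : 'I_n) : mxeval W (drow d i) = delta_mx 0 i.
Proof.
apply/matrixP=> k l; rewrite !mxE /= ord1 eqxx /=.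
by case: (l == i); rewrite ?scale1r ?scale0r.
Qed.

Lemma ev_dcol n (i : 'I_n) : mxeval W (dcol d i) = delta_mx i 0.
Proof.
apply/matrixP=> k l; rewrite !mxE /= ord1 eqxx andbT.
by case: (k == i); rewrite ?scale1r ?scale0r.
Qed.
End Eval.



Record rep d := Rep { rn : nat; rP : 'M[ncpoly d]_rn;
   ru : 'M[ncpoly d]_(1, rn); rv : 'M[ncpoly d]_(rn, 1) }.

Definition isval (Z : algType Cx) d (W : 'I_d -> Z) (R : rep d) (a : Z) :=
  exists N, mxeval W (rP R) *m N = 1%:M /\ N *m mxeval W (rP R) = 1%:M /\
     mxeval W (ru R) *m N *m mxeval W (rv R) = a%:M.

Section Reps.
Variable d : nat.
Definition elR (p : ncpoly d) := Rep (cmx1 (NCConst d 1)) (cmx1 p) (cmx1 (NCConst d 1)).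
Definition sumR (R1 R2 : rep d) :=
  Rep (block_mx (rP R1) (zmx d _ _) (zmx d _ _) (rP R2))
      (row_mx (ru R1) (ru R2)) (col_mx (rv R1) (rv R2)).
Definition negR (R : rep d) := Rep (rP R) (ru R) (negmx (rv R)).
Definition mulR (R1 R2 : rep d) :=
  Rep (block_mx (rP R1) (negmx (outmx (rv R1) (ru R2))) (zmx d _ _) (rP R2))
      (row_mx (ru R1) (zmx d _ _)) (col_mx (zmx d _ _) (rv R2)).
Definition sclR c (R : rep d) := Rep (rP R) (sclmx c (ru R)) (rv R).
Definition invR (R : rep d) :=
  Rep (block_mx (rP R) (negmx (rv R)) (ru R) (cmx1 (NCConst d 0)))
      (row_mx (zmx d _ _) (cmx1 (NCConst d 1))) (col_mx (zmx d _ _) (cmx1 (NCConst d 1))).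
Definition entR n (P : 'M[ncpoly d]_n) i j := Rep P (drow d i) (dcol d j).
End Reps.

Section IsVal.
Variables (Z : algType Cx) (d : nat) (W : 'I_d -> Z).

Lemma isval_el p : isval W (elR p) (nceval W p).
Proof.
exists 1%:M; rewrite /= !ev_cmx1 /= scale1r !mulmx1; split=> //.
Qed.

Lemma isval_sum R1 R2 a1 a2 : isval W R1 a1 -> isval W R2 a2 ->
  isval W (sumR R1 R2) (a1 + a2).
Proof.
case=> N1 [h1 [h1' e1]] [N2 [h2 [h2' e2]]].
exists (block_mx N1 0 0 N2); rewrite /= ev_block ev_row ev_col !ev_zmx.
rewrite !mulmx_block mul_row_block mul_row_col !mulmx0 !mul0mx !addr0 !add0r.
by rewrite h1 h2 h1' h2' -scalar_mx_block e1 e2 raddfD.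
Qed.

Lemma isval_neg R a : isval W R a -> isval W (negR R) (- a).
Proof.
case=> N [h [h' e]]; exists N; rewrite /= ev_neg mulmxN e; do 2!split=> //.
by rewrite raddfN.
Qed.

Lemma isval_mul R1 R2 a1 a2 : isval W R1 a1 -> isval W R2 a2 ->
  isval W (mulR R1 R2) (a1 * a2).
Proof.
case=> N1 [h1 [h1' e1]] [N2 [h2 [h2' e2]]].
set v1 := mxeval W (rv R1); set u2 := mxeval W (ru R2).
exists (block_mx N1 (N1 *m v1 *m u2 *m N2) 0 N2).
rewrite /= ev_block ev_row ev_col !ev_zmx ev_neg ev_out -/v1 -/u2.
rewrite !mulmx_block mul_row_block mul_row_col !mulmx0 !mul0mx !addr0 !add0r.
split; last split.
- rewrite scalar_mx_block h1 h2; congr block_mx.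
  by rewrite !mulmxA h1 mul1mx mulNmx addrN.
- rewrite scalar_mx_block h1' h2'; congr block_mx.
  by rewrite mulmxN -!mulmxA h2' mulmx1 !mulmxA addNr.
- by rewrite scalar_mxM -e1 -e2 !mulmxA.
Qed.

Lemma isval_scl c R a : isval W R a -> isval W (sclR c R) (c *: a).
Proof.
case=> N [h [h' e]]; exists N; rewrite /= ev_scl; do 2!split=> //.
by rewrite -!mulmxA (mulmxA _ N) e -scalar_mxM mulr_algl.
Qed.

Lemma isval_inv R a b : isval W R a -> a * b = 1 -> b * a = 1 ->
  isval W (invR R) b.
Proof.
case=> N [h [h' e]] ab ba.
set P := mxeval W (rP R); set u := mxeval W (ru R); set v := mxeval W (rv R).
have ab' : u *m N *m v *m b%:M = 1%:M by rewrite e -scalar_mxM ab.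
have ba' : b%:M *m (u *m N *m v) = 1%:M by rewrite e -scalar_mxM ba.
exists (block_mx (N - N *m v *m b%:M *m u *m N) (N *m v *m b%:M)
                 (- (b%:M *m u *m N)) b%:M).
rewrite /= ev_block ev_row ev_col !ev_zmx ev_neg !ev_cmx1 /= -/P -/u -/v.
rewrite ?scale0r ?scale1r ?scalemx0.
rewrite !mulmx_block mul_row_block mul_row_col !mulmx0 !mul0mx !addr0 !add0r.
rewrite ?mul0mx ?add0r !mulmxBr !mulmxBl.
split; last split.
- rewrite scalar_mx_block; congr block_mx.
  + by rewrite mulNmx mulmxN opprK !mulmxA h mul1mx subrK.
  + by rewrite !mulmxA h mul1mx mulNmx addrN.
  + by rewrite !mulmxA ab' mul1mx subrr.
  + by rewrite !mulmxA ab'.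
- rewrite scalar_mx_block; congr block_mx.
  + by rewrite -!mulmxA h' !mulmx1 subrK.
  + by rewrite !mulmxN opprK -!mulmxA (mulmxA u N v) ba' mulmx1 addNr.
  + by rewrite mulNmx -!mulmxA h' mulmx1 addNr.
  + by rewrite mulmxN mulNmx opprK -!mulmxA (mulmxA u N v) ba'.
- by rewrite mul1mx mulmx1.
Qed.

Lemma isval_ent n (P : 'M[ncpoly d]_n) N i j :
  mxeval W P *m N = 1%:M -> N *m mxeval W P = 1%:M -> isval W (entR P i j) (N i j).
Proof.
move=> h h'; exists N; rewrite /= ev_drow ev_dcol; do 2!split=> //.
rewrite -rowE -colE; apply/matrixP=> k l; rewrite !ord1 !mxE eqxx mulr1n.
by [].
Qed.
End IsVal.



Section Rank.
Variables (Z : algType Cx) (rk : forall m n : nat, 'M[Z]_(m, n) -> Rr).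
Hypothesis hsyl : sylvester_rank rk.

Lemma rk_mulL m n p (M : 'M[Z]_(m, n)) (N : 'M[Z]_(n, p)) : rk (M *m N) <= rk M.
Proof. by case: hsyl => _ _ hm _ _; have := hm _ _ _ M N; rewrite le_min => /andP[]. Qed.

Lemma rk_mulR m n p (M : 'M[Z]_(m, n)) (N : 'M[Z]_(n, p)) : rk (M *m N) <= rk N.
Proof. by case: hsyl => _ _ hm _ _; have := hm _ _ _ M N; rewrite le_min => /andP[]. Qed.

Lemma rk_invL m n (L L' : 'M[Z]_m) (M : 'M[Z]_(m, n)) :
  L' *m L = 1%:M -> rk (L *m M) = rk M.
Proof.
move=> h; apply/eqP; rewrite eq_le rk_mulR /=.
by rewrite -{1}(mul1mx M) -h -mulmxA rk_mulR.
Qed.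

Lemma rk_invR m n (R R' : 'M[Z]_n) (M : 'M[Z]_(m, n)) :
  R *m R' = 1%:M -> rk (M *m R) = rk M.
Proof.
move=> h; apply/eqP; rewrite eq_le rk_mulL /=.
by rewrite -{1}(mulmx1 M) -h mulmxA rk_mulL.
Qed.

Lemma rk_id n : rk (1%:M : 'M[Z]_n) = n%:R.
Proof.
case: hsyl => [[_ hz] h1 _ hd _].
elim: n => [|n IH].
  by rewrite (_ : 1%:M = 0) ?hz // ; apply/matrixP => [[]].
have := hd 1%N 1%N n n 1%:M 1%:M; rewrite -scalar_mx_block h1 IH => ->.
by rewrite -natr1 addrC.
Qed.

Lemma rk_unit n (P N : 'M[Z]_n) : P *m N = 1%:M -> rk P = n%:R.
Proof.
move=> h; apply/eqP; rewrite eq_le; apply/andP; split.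
  by rewrite -(rk_id n) -{1}(mul1mx P) rk_mulL.
by rewrite -(rk_id n) -h rk_mulL.
Qed.

Lemma rk_neg m n (M : 'M[Z]_(m, n)) : rk (- M) = rk M.
Proof.
have -> : - M = (- 1)%:M *m M by rewrite mul_scalar_mx scaleN1r.
rewrite (@rk_invL _ _ _ (- 1)%:M) //.
by rewrite -scalar_mxM mulrNN mulr1.
Qed.

Lemma rk_formula n (P N : 'M[Z]_n) (u : 'M[Z]_(1, n)) (v : 'M[Z]_(n, 1)) :
  P *m N = 1%:M -> N *m P = 1%:M ->
  rk (block_mx P v u 0) = n%:R + rk (u *m N *m v).
Proof.
move=> h h'.
pose L : 'M[Z]_(n + 1) := block_mx 1%:M 0 (- (u *m N)) 1%:M.
pose L' : 'M[Z]_(n + 1) := block_mx 1%:M 0 (u *m N) 1%:M.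
pose R : 'M[Z]_(n + 1) := block_mx 1%:M (- (N *m v)) 0 1%:M.
pose R' : 'M[Z]_(n + 1) := block_mx 1%:M (N *m v) 0 1%:M.
have hL : L' *m L = 1%:M.
  rewrite /L /L' mulmx_block !mul1mx !mulmx0 ?mul0mx !mulmx1 ?addr0 ?add0r addrN.
  by rewrite -scalar_mx_block.
have hR : R *m R' = 1%:M.
  rewrite /R /R' mulmx_block !mul1mx !mulmx0 ?mul0mx !mulmx1 ?addr0 ?add0r addrN.
  by rewrite -scalar_mx_block.
rewrite -(rk_invL _ hL) -(rk_invR _ hR).
rewrite /L /R !mulmx_block ?mul1mx ?mul0mx ?mulmx0 ?addr0 ?add0r ?mulmx1.
rewrite mulNmx -(mulmxA u N P) h' mulmx1 addNr mul0mx add0r mulmxN (mulmxA P N v) h mul1mx addNr mulNmx.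
case: hsyl => _ _ _ hd _; rewrite hd rk_neg (rk_unit h) //.
Qed.

Lemma rk1_unit (a b : Z) : a * b = 1 -> rk (a%:M : 'M_1) = 1.
Proof.
case: hsyl => _ h1 _ _ _ hab.
apply/eqP; rewrite eq_le; apply/andP; split.
  by rewrite -h1 -{1}(mulmx1 a%:M) rk_mulR.
by rewrite -h1 -hab scalar_mxM rk_mulL.
Qed.

Lemma rk1_zero (a : Z) : rank_faithful rk -> rk (a%:M : 'M_1) = 0 -> a = 0.
Proof.
move=> hf h; apply/eqP; apply: contraT => ha.
have : (a%:M : 'M[Z]_1) != 0.
  by apply: contra ha => /eqP/matrixP/(_ 0 0); rewrite !mxE eqxx mulr1n => ->.
by move/hf; rewrite h ltxx.
Qed.

Lemma rk1_inv (a : Z) : rank_regular rk -> rk (a%:M : 'M_1) = 1 ->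
  exists b, a * b = 1 /\ b * a = 1.
Proof.
move=> hr h; have [N [h1 h2]] := hr 1%N (a%:M) h.
exists (N 0 0); split.
  by move/matrixP: h1 => /(_ 0 0); rewrite mul_scalar_mx !mxE eqxx mulr1n.
move/matrixP: h2 => /(_ 0 0); rewrite !mxE big_ord1 !mxE eqxx !mulr1n.
by [].
Qed.
End Rank.



Definition good (A : algType Cx) (rk : forall m n : nat, 'M[A]_(m, n) -> Rr) :=
  [/\ sylvester_rank rk, rank_faithful rk & rank_regular rk].

Section Transfer.
Set Default Proof Using "All".
Variables (A B : algType Cx)
    (rkA : forall m n : nat, 'M[A]_(m, n) -> Rr)
    (rkB : forall m n : nat, 'M[B]_(m, n) -> Rr).
Hypotheses (gA : good rkA) (gB : good rkB).
Variables (d : nat) (X : 'I_d -> A) (Y : 'I_d -> B).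
Hypothesis hXY : forall m n (P : 'M[ncpoly d]_(m, n)),
        @rkA m n (mxeval X P) = @rkB m n (mxeval Y P).

Lemma transfer_inv n (P : 'M[ncpoly d]_n) N :
  mxeval X P *m N = 1%:M -> 
  exists N', mxeval Y P *m N' = 1%:M /\ N' *m mxeval Y P = 1%:M.
Proof.
case: gA => sA _ _; case: gB => sB _ rB.
move=> h; apply: rB; rewrite -hXY; exact: rk_unit h.
Qed.

Lemma isval_ex R a : isval X R a -> exists b, isval Y R b.
Proof.
case=> N [h [h' e]]; have [N' [k k']] := transfer_inv h.
exists ((mxeval Y (ru R) *m N' *m mxeval Y (rv R)) 0 0); exists N'.
by do 2!split=> //; rewrite -mx11_scalar.
Qed.

Lemma isval_rk R a b : isval X R a -> isval Y R b ->
  @rkA 1 1 (a%:M) = @rkB 1 1 (b%:M).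
Proof.
case: gA => sA _ _; case: gB => sB _ _.
case=> N [h [h' e]] [N' [k [k' e']]].
have := hXY (block_mx (rP R) (rv R) (ru R) (zmx d 1 1)).
rewrite !ev_block !ev_zmx (rk_formula sA _ _ h h') (rk_formula sB _ _ k k').
by rewrite e e' => /addrI.
Qed.

Lemma compat R1 R2 a b1 b2 : isval X R1 a -> isval Y R1 b1 ->
  isval X R2 a -> isval Y R2 b2 -> b1 = b2.
Proof.
move=> x1 y1 x2 y2.
have := isval_rk (isval_sum x1 (isval_neg x2)) (isval_sum y1 (isval_neg y2)).
case: gA => [[[_ hz] _ _ _ _] _ _]; case: gB => sB fB _.
rewrite subrr (_ : (0 : A)%:M = 0); last by apply/matrixP=> i j; rewrite !mxE mul0rn.
rewrite hz => /esym /(rk1_zero fB) /eqP; rewrite subr_eq0 => /eqP //.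
Qed.

Lemma rat_rep r a : rat_eval X r a ->
  exists R, isval X R a /\ exists b, rat_eval Y r b /\ isval Y R b.
Proof.
elim=> [c|i|r1 s a1 a2 _ [R1 [x1 [b1 [y1 z1]]]] _ [R2 [x2 [b2 [y2 z2]]]]
        |r1 s a1 a2 _ [R1 [x1 [b1 [y1 z1]]]] _ [R2 [x2 [b2 [y2 z2]]]]
        |r1 a1 a2 _ [R1 [x1 [b1 [y1 z1]]]] h1 h2].
- exists (elR (NCConst d c)); split; first exact: (isval_el X (NCConst d c)).
  exists c%:A; split; [exact: rev_const | exact: (isval_el Y (NCConst d c))].
- exists (elR (NCVar i)); split; first exact: (isval_el X (NCVar i)).
  exists (Y i); split; [exact: rev_var | exact: (isval_el Y (NCVar i))].
- exists (sumR R1 R2); split; first exact: isval_sum.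
  exists (b1 + b2); split; [exact: rev_add | exact: isval_sum].
- exists (mulR R1 R2); split; first exact: isval_mul.
  exists (b1 * b2); split; [exact: rev_mul | exact: isval_mul].
- case: gA => sA _ _; case: gB => sB _ rB.
  have hr : @rkB 1 1 (b1%:M) = 1 by rewrite -(isval_rk x1 z1) (rk1_unit sA h1).
  have [b' [k1 k2]] := rk1_inv rB hr.
  exists (invR R1); split; first exact: isval_inv x1 h1 h2.
  exists b'; split; [exact: rev_inv y1 k1 k2 | exact: isval_inv z1 k1 k2].
Qed.
End Transfer.

Lemma rat_det (Z : algType Cx) d (W : 'I_d -> Z) r a b :
  rat_eval W r a -> rat_eval W r b -> a = b.
Proof.
move=> h; elim: h b => [c|i|r1 s a1 a2 _ IH1 _ IH2|r1 s a1 a2 _ IH1 _ IH2|r1 a1 a2 _ IH h1 h2] b hb;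
  inversion hb; subst => //.
- by rewrite (IH1 _ H1) (IH2 _ H3).
- by rewrite (IH1 _ H1) (IH2 _ H3).
- have e := IH _ H0; rewrite -e in H1.
  by rewrite -[a2]mulr1 -H1 mulrA h2 mul1r.
Qed.

Unset Implicit Arguments. Set Strict Implicit.

Theorem corollary2p22 (A B : algType Cx)
    (rkA : forall m n : nat, 'M[A]_(m, n) -> Rdefinitions.R)
    (rkB : forall m n : nat, 'M[B]_(m, n) -> Rdefinitions.R)
    (rkA_syl : sylvester_rank rkA) (rkA_faith : rank_faithful rkA)
    (rkA_reg : rank_regular rkA)
    (rkB_syl : sylvester_rank rkB) (rkB_faith : rank_faithful rkB)
    (rkB_reg : rank_regular rkB)
    (d : nat) (X : 'I_d -> A) (Y : 'I_d -> B)
    (hXY : forall m n (P : 'M[ncpoly d]_(m, n)),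
        rkA m n (mxeval X P) = rkB m n (mxeval Y P)) :
  subalg_isomorphic (rational_closure X) (rational_closure Y) /\
  (forall r : ratexpr d,
      (well_defined Y r <-> well_defined X r) /\
      (forall (a : A) (b : B), rat_eval X r a -> rat_eval Y r b ->
          rkB 1%N 1%N (b%:M) = rkA 1%N 1%N (a%:M))).
Proof.
have gA : good rkA by split.
have gB : good rkB by split.
have hYX : forall m n (P : 'M[ncpoly d]_(m, n)),
    rkB m n (mxeval Y P) = rkA m n (mxeval X P) by move=> m n P; rewrite hXY.
split.
  pose f := fun a : A => epsilon (inhabits (0 : B))
                           (fun b => exists R, isval X R a /\ isval Y R b).
  have fchar : forall R a b, isval X R a -> isval Y R b -> f a = b.
    move=> R a b xa yb.
    have : exists b, exists R, isval X R a /\ isval Y R b by exists b, R.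
    move/(epsilon_spec (inhabits (0 : B))) => [R' [x' y']].
    exact: (compat gA gB hXY x' y' xa yb).
  have repSA : forall a, rational_closure X a ->
      exists R b, isval X R a /\ isval Y R b /\ rational_closure Y b.
    move=> a [n [P [N [i [j [h [h' ->]]]]]]].
    have [N' [k k']] := transfer_inv gA gB hXY h.
    exists (entR P i j), (N' i j); split; first exact: isval_ent.
    split; first exact: isval_ent.
    by exists n, P, N', i, j.
  exists f; split.
  - split.
      move=> a /repSA [R [b [x [y sb]]]]; by rewrite (fchar _ _ _ x y).
    move=> a1 a2 /repSA [R1 [b1 [x1 [y1 _]]]] /repSA [R2 [b2 [x2 [y2 _]]]].
    rewrite (fchar _ _ _ x1 y1) (fchar _ _ _ x2 y2) => e; subst b2.
    exact: (compat gB gA hYX y1 x1 y2 x2).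
  - move=> b [n [P [N [i [j [h [h' ->]]]]]]].
    have [N' [k k']] := transfer_inv gB gA hYX h.
    exists (N' i j); first by exists n, P, N', i, j.
    exact: (fchar _ _ _ (isval_ent i j k k') (isval_ent i j h h')).
  - split.
      move=> a1 a2 /repSA [R1 [b1 [x1 [y1 _]]]] /repSA [R2 [b2 [x2 [y2 _]]]].
      rewrite (fchar _ _ _ x1 y1) (fchar _ _ _ x2 y2).
      exact: (fchar _ _ _ (isval_sum x1 x2) (isval_sum y1 y2)).
    move=> a1 a2 /repSA [R1 [b1 [x1 [y1 _]]]] /repSA [R2 [b2 [x2 [y2 _]]]].
    rewrite (fchar _ _ _ x1 y1) (fchar _ _ _ x2 y2).
    exact: (fchar _ _ _ (isval_mul x1 x2) (isval_mul y1 y2)).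
  - move=> c a /repSA [R [b [x [y _]]]].
    rewrite (fchar _ _ _ x y).
    exact: (fchar _ _ _ (isval_scl c x) (isval_scl c y)).
  - have := isval_el X (NCConst d 1); have := isval_el Y (NCConst d 1).
    rewrite /= !scale1r => y x.
    exact: (fchar _ _ _ x y).
move=> r; split; first split.
- case=> b hb; have [R [_ [a [ha _]]]] := rat_rep gB gA hYX hb.
  by exists a.
- case=> a ha; have [R [_ [b [hb _]]]] := rat_rep gA gB hXY ha.
  by exists b.
- move=> a b ha hb; have [R [x [b' [hb' y]]]] := rat_rep gA gB hXY ha.
  rewrite (rat_det hb hb'); symmetry; exact: (isval_rk gA gB hXY x y).
Qed.
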